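(* Let $\mathrm{nF}(F)$ denote the number of reflective numerical semigroups with Frobenius number $F$. Then $\mathrm{nF}(F)=(1-\log 2)F+O(\sqrt{F})$ as $F\to\infty$ (with $\log$ the natural logarithm); in particular $\lim_{F\to\infty}\mathrm{nF}(F)/F=1-\log 2$.
   Context: A numerical semigroup is a submonoid $S$ of $(\mathbb{N}_0,+)$ with finite complement; its genus is the number of elements of $\mathbb{N}_0\setminus S$ and its Frobenius number is its largest gap. A numerical semigroup $S$ of genus $g\ge1$ is called reflective if for every $z\in\{0,1,\dots,g-1\}$ exactly one of $z$ and $z+g$ belongs to $S$. *)

(* Defs.v *)
From mathcomp Require Import all_boot all_order all_algebra finmap.
From mathcomp Require Import all_classical all_reals all_analysis.
Set Implicit Arguments. Unset Strict Implicit. Unset Printing Implicit Defensive.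
Local Open Scope classical_set_scope.
Local Open Scope fset_scope.

Definition numerical_semigroup (S : set nat) : Prop :=
  S 0%N /\ (forall a b, S a -> S b -> S (a + b)%N) /\ finite_set (~` S).

Definition genus (S : set nat) : nat := #|` fset_set (~` S)|.

Definition is_frobenius (S : set nat) (F : nat) : Prop :=
  ~ S F /\ (forall n, ~ S n -> (n <= F)%N).

Definition reflective (S : set nat) : Prop :=
  (1 <= genus S)%N /\
  forall z, (z < genus S)%N -> (S z <-> ~ S (z + genus S)%N).

Definition nF (F : nat) : nat :=
  #|` fset_set [set S : set nat | numerical_semigroup S /\ reflective S
                                  /\ is_frobenius S F] |.

(* Main.v *)
Require Import Defs.
From mathcomp Require Import all_boot all_order all_algebra finmap.
From mathcomp Require Import all_classical all_reals all_analysis.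
From mathcomp Require Import zify ring lra.
Import Order.TTheory GRing.Theory Num.Theory.

Set Implicit Arguments. Unset Strict Implicit. Unset Printing Implicit Defensive.

Definition Sg (d m g x : nat) : bool :=
  if x < g then (d %| x) && (x <= m)
  else if x < g.*2 then ~~ ((d %| (x - g)) && (x - g <= m)) else true.

Lemma dvd_gap d s m : 0 < d -> d %| s -> d %| m -> m < s -> m + d <= s.
Proof.
move=> d0 /dvdnP[a ->] /dvdnP[b ->]; rewrite ltn_pmul2r // => ab.
by rewrite -mulSnr leq_mul2r ab orbT.
Qed.

Section SgProps.
Variables (d m g : nat).
Hypotheses (d0 : 0 < d) (dm : d %| m) (mg : m < g) (gmd : g < m + d).

Lemma Sg_add x y : Sg d m g x -> Sg d m g y -> Sg d m g (x + y).
Proof.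
have key : forall x y, x < g -> Sg d m g x -> Sg d m g y -> Sg d m g (x + y).
  move=> {}x {}y xg; rewrite /Sg xg => /andP[dx xm].
  case: ifP => yg.
    move=> /andP[dy ym].
    have dxy : d %| x + y by rewrite dvdn_add.
    case: ifP => sg.
      rewrite dxy /=; case: (leqP (x + y) m) => // mlt.
      by have := dvd_gap d0 dxy dm mlt; lia.
    have -> : x + y < g.*2 by lia.
    apply/negP => /andP[dsg _].
    have dg : d %| g.
      by have := dvdn_sub dxy dsg; rewrite subKn //; lia.
    have := dvd_gap d0 dg dm mg; lia.
  case: ifP => y2g; last first.
    by move=> _; rewrite ifF; [rewrite ifF //|]; lia.
  move=> hy; rewrite ifF; last by lia.
  case: ifP => // _; apply: contra hy => /andP[h1 h2].
  have e : x + y - g = x + (y - g) by lia.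
  rewrite e (dvdn_addr _ dx) in h1.
  by rewrite h1 /=; lia.
case: (ltnP x g) => xg; first exact: key.
case: (ltnP y g) => yg.
  by move=> hx hy; rewrite addnC; apply: key.
by move=> _ _; rewrite /Sg ifF ?ifF //; lia.
Qed.

Lemma Sg_big x : g.*2 <= x -> Sg d m g x.
Proof. by move=> h; rewrite /Sg ifF ?ifF //; lia. Qed.

Lemma Sg_refl z : z < g -> Sg d m g (z + g) = ~~ Sg d m g z.
Proof.
move=> zg; rewrite /Sg zg ifF; last by lia.
by rewrite ifT ?addnK //; lia.
Qed.

Lemma Sg_0 : Sg d m g 0.
Proof. by rewrite /Sg ifT ?dvdn0 //; lia. Qed.

Lemma Sg_F : ~~ Sg d m g (g + m).
Proof. by rewrite /Sg ifF ?ifT ?addKn ?dm ?leqnn //; lia. Qed.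

Lemma Sg_gap n : ~~ Sg d m g n -> n <= g + m.
Proof.
rewrite /Sg; case: ifP => ng; first by lia.
case: ifP => // _; rewrite negbK => /andP[_]; lia.
Qed.

Lemma small_m : m < d -> m = 0.
Proof.
move=> dm'; move: dm => /dvdnP[[|a] ea] //.
by move: dm'; rewrite ea mulSn ltnNge leq_addr.
Qed.

Lemma Sg_d : Sg d m g d.
Proof.
rewrite /Sg; case: ifP => dg.
  rewrite dvdnn /=; case: (leqP d m) => // dm'.
  have := small_m dm'; lia.
case: ifP => // _; apply/negP => /andP[_].
case: (leqP d m) => h; first by lia.
have := small_m h; lia.
Qed.

End SgProps.

Lemma count_pair (P : pred nat) g : (forall z, z < g -> P (z + g) = ~~ P z) ->
  count P (iota 0 g.*2) = g.
Proof.
move=> h; rewrite -addnn iotaD count_cat add0n.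
have -> : iota g g = map (addn g) (iota 0 g) by rewrite -iotaDl addn0.
rewrite count_map.
rewrite (@eq_in_count _ (preim (addn g) P) (predC P)); last first.
  by move=> z; rewrite mem_iota add0n /= => zg; rewrite addnC h.
by rewrite count_predC size_iota.
Qed.

Definition Sd (F d : nat) : nat -> bool :=
  Sg d (F %/ d.*2 * d) (F - F %/ d.*2 * d).

Definition Eb (F d : nat) : bool := [&& 0 < d, d <= F.+1, 0 < F %% d.*2 & F %% d.*2 < d].

Lemma Eb_hyps F d : Eb F d ->
  [/\ 0 < d, d %| F %/ d.*2 * d, F %/ d.*2 * d < F - F %/ d.*2 * d,
      F - F %/ d.*2 * d < F %/ d.*2 * d + d &
      F = (F - F %/ d.*2 * d) + F %/ d.*2 * d].
Proof.
case/and4P=> d0 dF r0 rd.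
have e := divn_eq F d.*2.
set k := F %/ d.*2 in e *; set r := F %% d.*2 in e r0 rd *.
have e2 : k * d.*2 = k * d + k * d by rewrite -addnn mulnDr.
split => //; [exact: dvdn_mull | lia | lia | lia].
Qed.

Lemma hyps_Eb F d m g : 0 < d -> d %| m -> m < g -> g < m + d ->
  d <= F.+1 -> F = g + m ->
  [/\ Eb F d, F %/ d.*2 * d = m & F - m = g].
Proof.
move=> d0 /dvdnP[j ->] mg gmd dF eF.
have eF2 : F = j * d.*2 + (g - j * d).
  by rewrite -addnn mulnDr; lia.
have d20 : 0 < d.*2 by lia.
have rlt : g - j * d < d.*2 by lia.
have hdiv : F %/ d.*2 = j by rewrite eF2 divnMDl // divn_small // addn0.
have hmod : F %% d.*2 = g - j * d by rewrite eF2 modnMDl modn_small.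
rewrite hdiv; split => //; last by lia.
rewrite /Eb d0 dF hmod /=; apply/andP; split; lia.
Qed.

Lemma Sg_inj d d' m' g' : 0 < d -> d < d' -> d' %| m' -> m' < g' -> d' <= (g' + m').+1 ->
  ~~ Sg d' m' g' d.
Proof.
move=> d0 dd' dm' mg dF; rewrite /Sg; case: ifP => dg.
  apply/negP => /andP[/dvdn_leq]; lia.
have m0 : m' = 0.
  move: dm' => /dvdnP[[|a] ea] //; move: ea; rewrite mulSn; lia.
have -> : d = g' by lia.
by rewrite ifT ?subnn ?dvdn0 //; lia.
Qed.

Section Back.
Variables (s : pred nat) (F g : nat).
Hypotheses (s0 : s 0) (sadd : forall x y, s x -> s y -> s (x + y))
  (g0 : 0 < g) (refl : forall z, z < g -> s (z + g) = ~~ s z)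
  (sF : ~~ s F) (frob : forall n, ~~ s n -> n <= F)
  (gen : count (predC s) (iota 0 F.+1) = g).

Lemma F2g : F < g.*2.
Proof.
rewrite ltnNge; apply/negP => h.
have e : F.+1 = g.*2 + (F.+1 - g.*2) by lia.
move: gen; rewrite e iotaD count_cat.
have -> : count (predC s) (iota 0 g.*2) = g.
  by apply: count_pair => z zg; rewrite /= refl ?negbK.
have : 0 < count (predC s) (iota (0 + g.*2) (F.+1 - g.*2)).
  rewrite -has_count; apply/hasP; exists F => //.
  rewrite mem_iota; lia.
lia.
Qed.

Lemma gF : g <= F.
Proof. by apply: frob; rewrite -(add0n g) refl // s0. Qed.

Let m := F - g.

Lemma big_in x : g.*2 <= x -> s x.
Proof. move=> h; apply/negPn/negP => /frob; have := F2g; lia. Qed.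

Lemma low_le x : x < g -> s x -> x <= m.
Proof. move=> xg sx; have : ~~ s (x + g) by rewrite refl // sx.
move/frob; rewrite /m; lia. Qed.

Lemma s_m : s m.
Proof.
have mg : m < g by rewrite /m; have := F2g; lia.
have := refl mg; rewrite /m subnK ?gF // => e.
by apply/negPn; rewrite -e.
Qed.

Lemma s_mul d j : s d -> s (j * d).
Proof. move=> sd; elim: j => [|j ih]; first by rewrite mul0n. by rewrite mulSn sadd. Qed.

Lemma ex_pos : exists x, (0 < x) && s x.
Proof. exists F.+1; rewrite ltn0Sn /=; apply/negPn/negP => /frob; lia. Qed.

Definition dmin := ex_minn ex_pos.

Lemma dmin_props : [/\ 0 < dmin, s dmin & forall x, 0 < x -> s x -> dmin <= x].
Proof.
rewrite /dmin; case: ex_minnP => d /andP[d0 sd] h; split => // x x0 sx.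
by apply: h; rewrite x0.
Qed.

Lemma low_dvd x : x <= m -> s x -> dmin %| x.
Proof.
case: dmin_props => d0 sd dmin_min xm sx.
have mg : m < g by rewrite /m; have := F2g; lia.
have e := divn_eq x dmin.
have rl : x %% dmin < dmin by rewrite ltn_mod.
case: (posnP (x %% dmin)) => r0; first by apply/dvdnP; exists (x %/ dmin); lia.
have nsr : ~~ s (x %% dmin).
  by apply/negP => sr; have := dmin_min _ r0 sr; lia.
have dx : dmin <= x.
  apply: dmin_min => //; case: (posnP x) => [x0|//]; by move: r0; rewrite x0 mod0n.
have srg : s (x %% dmin + g) by rewrite refl ?nsr //; lia.
have : s (x %% dmin + g + x %/ dmin * dmin) by apply: sadd => //; apply: s_mul.
have -> : x %% dmin + g + x %/ dmin * dmin = x + g by lia.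
by rewrite refl ?sx //; lia.
Qed.

Lemma back : exists d, Eb F d /\ s =1 Sd F d.
Proof.
case: dmin_props => d0 sd dmin_min.
have mg : m < g by rewrite /m; have := F2g; lia.
have dm : dmin %| m by apply: low_dvd => //; apply: s_m.
have smd : s (m + dmin) by apply: sadd => //; apply: s_m.
have gmd : g < m + dmin.
  case: (ltnP (m + dmin) g) => h; first by have := low_le h smd; lia.
  rewrite leq_eqVlt in h; case/orP: h => // /eqP e.
  by move: smd; rewrite -e -(add0n g) refl // s0.
have dF : dmin <= F.+1.
  apply: dmin_min => //; apply/negPn/negP => /frob; lia.
have eF : F = g + m by rewrite /m; have := gF; lia.
case: (hyps_Eb d0 dm mg gmd dF eF) => hE hk hg.
exists dmin; split => // x.
rewrite /Sd hk hg /Sg.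
have lowc : forall y, y < g -> s y = (dmin %| y) && (y <= m).
  move=> y yg; apply/idP/idP.
    move=> sy; have ym := low_le yg sy; by rewrite ym low_dvd // andbT.
  by case/andP=> /dvdnP[j ->] _; apply: s_mul.
case: ifP => xg; first exact: lowc.
case: ifP => x2g; last by apply: big_in; lia.
have e : x = (x - g) + g by lia.
rewrite {1}e refl; last lia.
rewrite lowc //; lia.
Qed.

End Back.

Lemma sum_eqk (c : bool) q a b : a <= b ->
  \sum_(a <= k < b) (c && (q == k)) = c && (a <= q < b).
Proof.
elim: b => [|b ih] ab.
  have -> : a = 0 by lia.
  by rewrite big_geq //; case: c.
case: (ltnP a b.+1) => h; last first.
  have -> : a = b.+1 by lia.
  by rewrite big_geq //; case: (c) => //=; lia.
rewrite big_nat_recr //= ih; last by lia.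
case: (c) => //=; case: (eqVneq q b) => [->|qb]; lia.
Qed.

Lemma count_split (P : pred nat) (f : nat -> nat) s K :
  (forall x, P x -> f x < K) ->
  count P s = \sum_(0 <= k < K) count (fun x => P x && (f x == k)) s.
Proof.
move=> h; elim: s => [|x s ih] /=; first by rewrite big1.
rewrite big_split /= -ih sum_eqk //.
by case: (boolP (P x)) => //= px; rewrite h.
Qed.

Lemma count_int a b n : count (fun d => (a < d) && (d <= b)) (iota 0 n.+1) = minn b n - a.
Proof.
elim: n => [|n ih]; first by rewrite /=; lia.
rewrite -[n.+2]addn1 iotaD count_cat ih add0n /= addn0.
case: (boolP ((a < n + 1) && (n + 1 <= b))) => /= h; lia.
Qed.

Lemma Eb_k F d k : 0 < k ->
  Eb F d && (F %/ d.*2 == k) = (F %/ k.*2.+1 < d) && (d <= (F - 1) %/ k.*2).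
Proof.
move=> k0; have k20 : 0 < k.*2 by lia.
rewrite ltn_divLR // leq_divRL //.
apply/idP/idP.
  case/andP=> hE /eqP hk; case/and4P: hE => d0 dF r0 rd.
  have e := divn_eq F d.*2; rewrite hk in e.
  have e1 : k * d.*2 = d * k.*2 by rewrite -!muln2 mulnCA.
  have e2 : d * k.*2.+1 = d * k.*2 + d by rewrite mulnS addnC.
  rewrite e2; apply/andP; split; lia.
case/andP=> h1 h2.
have d0 : 0 < d by case: d h1 h2 => //; rewrite mul0n.
have e1 : k * d.*2 = d * k.*2 by rewrite -!muln2 mulnCA.
have e2 : d * k.*2.+1 = d * k.*2 + d by rewrite mulnS addnC.
have dk : d <= d * k.*2 by rewrite leq_pmulr.
set r := F - k * d.*2.
have eF : F = k * d.*2 + r by rewrite /r; lia.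
have rl : r < d.*2 by rewrite /r; lia.
have hdiv : F %/ d.*2 = k by rewrite eF divnMDl ?divn_small ?addn0 //; lia.
have hmod : F %% d.*2 = r by rewrite eF modnMDl modn_small.
rewrite hdiv eqxx andbT /Eb hmod d0 /=.
apply/and3P; split; rewrite /r; lia.
Qed.

Lemma N0_le1 F : count (fun d => Eb F d && (F %/ d.*2 == 0)) (iota 0 F.+2) <= 1.
Proof.
apply: (@leq_trans (count (pred1 F.+1) (iota 0 F.+2))); last first.
  by rewrite count_uniq_mem ?iota_uniq //; case: (_ \in _).
apply: sub_count => d /andP[/and4P[d0 dF r0 rd]] /eqP hk.
have e := divn_eq F d.*2; rewrite hk mul0n add0n in e.
rewrite /= ; apply/eqP; lia.
Qed.

Lemma tail_bound F K : 0 < K -> K <= F ->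
  \sum_(K.+1 <= k < F.+1) count (fun d => Eb F d && (F %/ d.*2 == k)) (iota 0 F.+2)
  <= F %/ K.+1.*2.
Proof.
move=> K0 KF.
have -> : \sum_(K.+1 <= k < F.+1) count (fun d => Eb F d && (F %/ d.*2 == k)) (iota 0 F.+2)
   = count (fun d => Eb F d && (K.+1 <= F %/ d.*2 < F.+1)) (iota 0 F.+2).
  elim: (iota 0 F.+2) => [|x s ih] /=; first by rewrite big1.
  by rewrite big_split /= ih sum_eqk.
have := count_int 0 (F %/ K.+1.*2) F.+1.
have -> : minn (F %/ K.+1.*2) F.+1 = F %/ K.+1.*2.
  by apply/minn_idPl; rewrite (leq_trans (leq_div _ _)).
rewrite subn0 => <-; apply: sub_count => d /andP[/and4P[d0 dF r0 rd]] /andP[hk _].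
rewrite d0 /= leq_divRL; last by lia.
have e := divn_eq F d.*2.
have : K.+1 * d.*2 <= F %/ d.*2 * d.*2 by rewrite leq_mul2r hk orbT.
rewrite -!muln2 mulnA [K.+1 * d]mulnC. lia.
Qed.

Unset Implicit Arguments.
Local Open Scope classical_set_scope.

Lemma card_bounded (A : set nat) (B : nat) : (forall x, A x -> x < B)%N ->
  #|` fset_set A| = count (fun x => `[< A x >]) (iota 0 B).
Proof.
move=> hB.
have eA : A = [set` [fset x in seq.filter (fun x => `[< A x >]) (iota 0 B)]%fset].
  apply/seteqP; split => x /=.
    move=> Ax; rewrite !inE mem_filter mem_iota /= add0n hB // andbT.
    by apply/asboolP.
  by rewrite !inE mem_filter => /andP[/asboolP].
rewrite {1}eA set_fsetK card_fseq undup_id ?seq.filter_uniq ?iota_uniq //.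
by rewrite size_filter.
Qed.

Lemma finite_bounded (A : set nat) (B : nat) : (forall x, A x -> x < B)%N ->
  finite_set A.
Proof. move=> h; apply: (sub_finite_set _ (finite_II B)) => x /h. by []. Qed.

Lemma bneg_iff (b : bool) : b <-> ~ ~~ b.
Proof. by case: b; split => // h; exfalso; apply: h. Qed.

Definition SdS (F d : nat) : set nat := fun x => Sd F d x.

Lemma fwd F d : Eb F d ->
  numerical_semigroup (SdS F d) /\ reflective (SdS F d) /\ is_frobenius (SdS F d) F.
Proof.
case/Eb_hyps.
set m := F %/ d.*2 * d; set g := F - m => d0 dm mg gmd eF.
have Sd_eq : SdS F d = fun x => Sg d m g x by [].
have gapb : forall x, (~` SdS F d) x -> (x < g.*2)%N.
  move=> x; rewrite Sd_eq /= => h; rewrite ltnNge; apply/negP => h2.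
  by apply: h; apply: (Sg_big d0 dm mg gmd).
have gen : genus (SdS F d) = g.
  rewrite /genus (@card_bounded _ _ gapb).
  rewrite (@eq_count _ _ (predC (Sg d m g))); last first.
    by move=> x; rewrite asbool_neg asboolb.
  by apply: count_pair => z zg /=; rewrite (Sg_refl d0 dm mg gmd).
split; [split; [|split]|split; [split|]].
- exact: (Sg_0 d0 dm mg gmd).
- by move=> a b; apply: (Sg_add d0 dm mg gmd).
- exact: (@finite_bounded _ _ gapb).
- rewrite gen; lia.
- move=> z; rewrite gen => zg; rewrite Sd_eq /= (Sg_refl d0 dm mg gmd) //.
  exact: bneg_iff.
- rewrite Sd_eq /= eF; split.
    by apply/negP; apply: (Sg_F d0 dm mg gmd).
  move=> n h; apply: (Sg_gap d0 dm mg gmd); exact/negP.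
Qed.

Lemma bwd S F : numerical_semigroup S -> reflective S -> is_frobenius S F ->
  exists d, Eb F d /\ S = SdS F d.
Proof.
case=> S0 [Sadd _] [g1 Srefl] [SF Sfrob].
pose s := fun x => `[< S x >].
have gapb : forall x, (~` S) x -> (x < F.+1)%N by move=> x /Sfrob.
have hrefl : forall z, (z < genus S)%N -> s (z + genus S) = ~~ s z.
  move=> z zg; rewrite /s; have := Srefl z zg => h.
  apply/idP/idP => [/asboolP a|/asboolPn a].
    by apply/asboolPn => Sz; apply: (h.1 Sz).
  apply/asboolP; apply: contrapT => nz; apply: a; exact: h.2 nz.
have := @back s F (genus S).
case.
- exact/asboolP.
- by move=> x y /asboolP a /asboolP b; apply/asboolP; apply: Sadd.
- exact: g1.
- exact: hrefl.
- exact/asboolPn.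
- by move=> n /asboolPn /Sfrob.
- rewrite /genus (@card_bounded _ _ gapb); apply: eq_count => x.
  by rewrite asbool_neg.
- move=> d [hE hs]; exists d; split => //.
  apply/funext => x; apply/propext; rewrite /SdS -hs /s.
  by split => [/asboolP|/asboolP].
Qed.

Lemma nF_count F : nF F = count (Eb F) (iota 0 F.+2).
Proof.
have eP : [set S : set nat | numerical_semigroup S /\ reflective S /\ is_frobenius S F]
    = SdS F @` [set d | Eb F d].
  apply/seteqP; split => S /=.
    case=> h1 [h2 h3]; have [d [hd ->]] := @bwd _ _ h1 h2 h3.
    by exists d.
  by case=> d hd <-; apply: fwd.
have Eb_lt : forall d, [set d | Eb F d] d -> (d < F.+2)%N.
  by move=> d /= /and4P[_ h _ _].
have Efin := @finite_bounded _ _ Eb_lt.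
rewrite /nF eP fset_set_image // card_in_imfset; last first.
  move=> d d'; rewrite !in_fset_set // !inE /= => hd hd' e.
  wlog lt : d d' hd hd' e / (d < d')%N.
    move=> W; case: (ltngtP d d') => // h; first exact: W.
    by apply/esym; apply: W.
  exfalso; have := Eb_hyps hd'; set m := _ * _; set g := F - m.
  move=> [d0 dm mg gmd eF].
  have := Sg_inj (d:=d) _ lt dm mg.
  have hd0 : (0 < d)%N by case/and4P: hd.
  have dF : (d' <= (g + m).+1)%N by rewrite -eF; case/and4P: hd'.
  move=> /(_ hd0 dF) /negP; apply.
  have : SdS F d' d by rewrite -e; case: (Eb_hyps hd) => *; apply: Sg_d.
  by [].
change (#|` fset_set [set d | Eb F d]| = count (Eb F) (iota 0 F.+2)).
rewrite (@card_bounded _ _ Eb_lt); apply: eq_count => x; by rewrite asboolb.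
Qed.
Local Open Scope ring_scope.

Section A.
Variable R : realType.

Lemma lnD_le (j : R) : 0 < j -> ln (j + 1) - ln j <= j^-1.
Proof.
move=> j0.
have -> : ln (j + 1) - ln j = ln (1 + j^-1).
  rewrite -ln_div ?posrE; [|lra|lra]; congr ln; field; lra.
apply: le_ln1Dx; have : 0 < j^-1 by rewrite invr_gt0. lra.
Qed.

Lemma lnD_ge (j : R) : 0 < j -> (j + 1)^-1 <= ln (j + 1) - ln j.
Proof.
move=> j0.
have -> : ln (j + 1) - ln j = - ln (1 + - (j+1)^-1).
  have -> : 1 + - (j + 1)^-1 = (j / (j + 1)).
    by field; apply: lt0r_neq0; lra.
  rewrite ln_div ?posrE; [lra|lra|lra].
have h : 0 < (j+1)^-1 by rewrite invr_gt0; lra.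
have h2 : (j+1)^-1 < 1 by rewrite invf_lt1; lra.
have := @le_ln1Dx _ (- (j+1)^-1); lra.
Qed.

Definition U (K : nat) : R := \sum_(K.+1 <= j < K.*2.+2) (j%:R)^-1.
Definition T (K : nat) : R := \sum_(1 <= k < K.+1) ((k.*2)%:R^-1 - (k.*2.+1)%:R^-1).

Lemma telescope_ln K : \sum_(K.+1 <= j < K.*2.+2) (ln (j.+1%:R : R) - ln (j%:R)) = ln 2.
Proof.
rewrite telescope_sumr; last by rewrite -addnn; lia.
have -> : (K.*2.+2)%:R = 2 * (K.+1)%:R :> R.
  by rewrite -natrM mul2n doubleS.
rewrite lnM ?posrE ?ltr0n //; lra.
Qed.

Lemma U_ge K : ln 2 <= U K.
Proof.
rewrite -(telescope_ln K) /U; apply: ler_sum_nat => j /andP[j1 _].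
have j0 : (0 : R) < j%:R by rewrite ltr0n; lia.
by have := @lnD_le j%:R j0; rewrite -natr1.
Qed.

Lemma U_le K : U K <= ln 2 + (K.+1%:R)^-1.
Proof.
have e : \sum_(K.+1 <= j < K.*2.+2) ((j%:R : R)^-1 - (j.+1%:R)^-1) = (K.+1%:R)^-1 - (K.*2.+2%:R)^-1.
  rewrite (@telescope_sumr_eq _ _ _ (fun j => - (j%:R : R)^-1)); first by rewrite opprK addrC.
    by lia.
  by move=> k _; rewrite opprK addrC.
have pos : (0 : R) <= (K.*2.+2%:R)^-1 by rewrite invr_ge0 ler0n.
have eq2 : \sum_(K.+1 <= j < K.*2.+2) ((ln (j.+1%:R : R) - ln (j%:R)) + ((j%:R : R)^-1 - (j.+1%:R)^-1))
   = ln 2 + ((K.+1%:R)^-1 - (K.*2.+2%:R)^-1).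
  by rewrite big_split /= e -(telescope_ln K).
rewrite /U; suff : \sum_(K.+1 <= j < K.*2.+2) (j%:R : R)^-1 <= \sum_(K.+1 <= j < K.*2.+2) ((ln (j.+1%:R : R) - ln (j%:R)) + ((j%:R : R)^-1 - (j.+1%:R)^-1)).
  rewrite eq2 => h; move: h pos; set b := (K.*2.+2%:R : R)^-1; set a := (K.+1%:R : R)^-1; set S := \sum_(_ <= _ < _) _; lra.
apply: ler_sum_nat => j /andP[j1 _].
have j0 : (0 : R) < j%:R by rewrite ltr0n; lia.
have := @lnD_ge j%:R j0; rewrite -natr1; lra.
Qed.

Lemma TU K : T K + U K = 1.
Proof.
elim: K => [|K ih].
  by rewrite /T /U big_geq // big_nat1 invr1 add0r.
have eT : T K.+1 = T K + ((K.+1.*2)%:R^-1 - (K.+1.*2.+1)%:R^-1).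
  by rewrite /T big_nat_recr.
pose V := \sum_(K.+2 <= j < K.*2.+2) (j%:R : R)^-1.
have e1 : U K = (K.+1%:R)^-1 + V by rewrite /U big_ltn //; lia.
have e2 : U K.+1 = V + (K.+1.*2)%:R^-1 + (K.+1.*2.+1)%:R^-1.
  rewrite /U doubleS big_nat_recr /=; last by lia.
  by rewrite big_nat_recr /=; last by lia.
have eU : U K.+1 = U K - (K.+1%:R)^-1 + (K.+1.*2)%:R^-1 + (K.+1.*2.+1)%:R^-1.
  rewrite e1 e2; clearbody V; set a := (K.+1%:R : R)^-1; set b := (K.+1.*2%:R : R)^-1; set c := (K.+1.*2.+1%:R : R)^-1.
  lra.
have h2 : (K.+1.*2%:R : R)^-1 = (K.+1%:R)^-1 / 2.
  by rewrite -muln2 natrM invfM.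
rewrite eT eU; move: ih h2.
set a := (K.+1%:R : R)^-1; set b := (K.+1.*2%:R : R)^-1; set c := (K.+1.*2.+1%:R : R)^-1.
lra.
Qed.

Lemma T_bounds K : 1 - ln 2 - (K.+1%:R)^-1 <= T K <= 1 - ln 2.
Proof.
have := TU K; have := U_ge K; have := U_le K.
set a := (K.+1%:R : R)^-1; move=> *; apply/andP; split; lra.
Qed.

Lemma fl_le (n q : nat) : (0 < q)%N -> ((n %/ q)%:R : R) <= n%:R / q%:R.
Proof.
move=> q0; rewrite ler_pdivlMr ?ltr0n // -natrM ler_nat; exact: leq_trunc_div.
Qed.

Lemma fl_gt (n q : nat) : (0 < q)%N -> (n%:R : R) / q%:R - 1 < ((n %/ q)%:R).
Proof.
move=> q0; rewrite ltrBlDr ltr_pdivrMr ?ltr0n // natr1 -natrM ltr_nat.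
exact: ltn_ceil.
Qed.

Lemma natrB_ge (a b : nat) : (b%:R : R) - a%:R <= (b - a)%:R.
Proof.
case: (leqP a b) => h; first by rewrite natrB.
have -> : (b - a = 0)%N by apply/eqP; rewrite subn_eq0 ltnW.
rewrite subr_le0 ler_nat; exact: ltnW.
Qed.

Lemma Nk_le (F k : nat) : (0 < k)%N ->
  (((F - 1) %/ k.*2 - F %/ k.*2.+1)%:R : R) <= F%:R / (k.*2)%:R - F%:R / (k.*2.+1)%:R + 1.
Proof.
move=> k0.
have k2 : (0 < k.*2)%N by rewrite double_gt0.
have hb := @fl_le (F - 1) _ k2.
have ha := @fl_gt F _ (ltn0Sn k.*2).
have hF : ((F - 1)%:R : R) / (k.*2)%:R <= F%:R / (k.*2)%:R.
  by rewrite ler_pM2r ?invr_gt0 ?ltr0n // ler_nat leq_subr.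
have hx : (F%:R : R) / (k.*2.+1)%:R <= F%:R / (k.*2)%:R.
  apply: ler_wpM2l; first exact: ler0n.
  by rewrite lef_pV2 ?posrE ?ltr0n ?ler_nat //.
case: (leqP ((F - 1) %/ k.*2) (F %/ k.*2.+1)) => h.
  have -> : ((F - 1) %/ k.*2 - F %/ k.*2.+1 = 0)%N by apply/eqP; rewrite subn_eq0.
  move: hx; set u := _ / _; set v := _ / _; lra.
rewrite natrB; last exact: ltnW.
move: hb ha hF hx; set A := ((F - 1) %/ k.*2)%:R; set B := (F %/ k.*2.+1)%:R.
set u := ((F - 1)%:R : R) / _; set v := (F%:R : R) / (k.*2)%:R; set w := (F%:R : R) / _.
lra.
Qed.

Lemma Nk_ge (F k : nat) : (0 < k)%N -> (0 < F)%N ->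
  F%:R / (k.*2)%:R - F%:R / (k.*2.+1)%:R - 2 <= (((F - 1) %/ k.*2 - F %/ k.*2.+1)%:R : R).
Proof.
move=> k0 F0.
have k2 : (0 < k.*2)%N by rewrite double_gt0.
have hb := @fl_gt (F - 1) _ k2.
have ha := @fl_le F _ (ltn0Sn k.*2).
have hF : ((F - 1)%:R : R) / (k.*2)%:R = F%:R / (k.*2)%:R - (k.*2%:R)^-1.
  by rewrite natrB // mulrBl mul1r.
have hp : ((k.*2)%:R : R)^-1 <= 1 by rewrite invf_le1 ?ler1n ?ltr0n.
have := natrB_ge (F %/ k.*2.+1) ((F - 1) %/ k.*2).
move: hb ha hF hp; set A := ((F - 1) %/ k.*2)%:R; set B := (F %/ k.*2.+1)%:R.
set C := (_ - _)%:R.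
set u := ((F - 1)%:R : R) / _; set v := (F%:R : R) / (k.*2)%:R; set w := (F%:R : R) / _.
set p := (_ ^-1).
lra.
Qed.

End A.
Local Open Scope ring_scope.
Local Open Scope nat_scope.
Definition Nk (F k : nat) := count (fun d => Eb F d && (F %/ d.*2 == k)) (iota 0 F.+2).
Local Close Scope nat_scope.

Section Fin.
Variable R : realType.


Lemma Nk_eq F k : (0 < k)%N -> Nk F k = ((F - 1) %/ k.*2 - F %/ k.*2.+1)%N.
Proof.
move=> k0; rewrite /Nk (eq_count (a2 := fun d => ((F %/ k.*2.+1 < d) && (d <= (F - 1) %/ k.*2))%N)).
  rewrite count_int; congr (_ - _)%N; apply/minn_idPl.
  by rewrite (leq_trans (leq_div _ _)) //; lia.
by move=> d; rewrite Eb_k.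
Qed.

Lemma nF_split F K : (0 < K)%N -> (K <= F)%N ->
  nF F = (Nk F 0 + \sum_(1 <= k < K.+1) Nk F k + \sum_(K.+1 <= k < F.+1) Nk F k)%N.
Proof.
move=> K0 KF.
rewrite nF_count (@count_split _ (fun d => (F %/ d.*2)%N) _ F.+1); last first.
  by move=> d _; rewrite ltnS leq_div.
rewrite big_ltn // (@big_cat_nat _ _ _ K.+1) ?addnA // ltnS.

Qed.

Lemma main_bounds F K : (0 < K)%N -> (K <= F)%N ->
  (1 - ln 2) * F%:R - F%:R / K.+1%:R - 2 * K%:R <= ((nF F)%:R : R) /\
  ((nF F)%:R : R) <= 1 + (1 - ln 2) * F%:R + K%:R + F%:R / (K.+1.*2)%:R.
Proof.
move=> K0 KF.
have F0 : (0 < F)%N by lia.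
rewrite (@nF_split F K K0 KF) natrD natrD.
have hsum : \sum_(1 <= k < K.+1) (Nk F k)%:R = \sum_(1 <= k < K.+1) ((((F - 1) %/ k.*2 - F %/ k.*2.+1)%N)%:R : R).
  by apply: eq_big_nat => k /andP[k0 _]; rewrite Nk_eq.
have ex : \sum_(1 <= k < K.+1) ((F%:R : R) / (k.*2)%:R - F%:R / (k.*2.+1)%:R) = F%:R * T R K.
  by rewrite /T mulr_sumr; apply: eq_bigr => k _; rewrite mulrBr.
have e_up : \sum_(1 <= k < K.+1) ((F%:R : R) / (k.*2)%:R - F%:R / (k.*2.+1)%:R + 1)
    = F%:R * T R K + K%:R.
  by rewrite big_split /= ex sumr_const_nat subn1 /= -[1 *+ K]mulr_natl mulr1.
have e_lo : \sum_(1 <= k < K.+1) ((F%:R : R) / (k.*2)%:R - F%:R / (k.*2.+1)%:R - 2)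
    = F%:R * T R K - 2 * K%:R.
  rewrite big_split /= ex sumr_const_nat subn1 /= -mulr_natr; ring.
have up : \sum_(1 <= k < K.+1) ((((F - 1) %/ k.*2 - F %/ k.*2.+1)%N)%:R : R)
   <= F%:R * T R K + K%:R.
  rewrite -e_up; apply: ler_sum_nat => k /andP[k0 _]; exact: Nk_le.
have lo : F%:R * T R K - 2 * K%:R <=
   \sum_(1 <= k < K.+1) ((((F - 1) %/ k.*2 - F %/ k.*2.+1)%N)%:R : R).
  rewrite -e_lo; apply: ler_sum_nat => k /andP[k0 _]; exact: Nk_ge.
have n0 : ((Nk F 0)%:R : R) <= 1 by rewrite -[1]/(1%:R) ler_nat; exact: N0_le1.
have tl : (((\sum_(K.+1 <= k < F.+1) Nk F k)%N)%:R : R) <= F%:R / (K.+1.*2)%:R.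
  apply: le_trans _ (@fl_le R F (K.+1.*2)%N isT).
  by rewrite ler_nat; apply: tail_bound.
have tb := T_bounds R K.
have Fpos : (0 : R) <= F%:R by rewrite ler0n.
have tb1 : F%:R * (1 - ln 2 - (K.+1%:R)^-1) <= F%:R * T R K by apply: ler_wpM2l => //; case/andP: tb.
have tb2 : F%:R * T R K <= F%:R * (1 - ln 2) by apply: ler_wpM2l => //; case/andP: tb.
have z0 : (0 : R) <= (Nk F 0)%:R by rewrite ler0n.
have z1 : (0 : R) <= ((\sum_(K.+1 <= k < F.+1) Nk F k)%N)%:R by rewrite ler0n.
have hs : (((\sum_(1 <= k < K.+1) Nk F k)%N)%:R : R) = \sum_(1 <= k < K.+1) ((((F - 1) %/ k.*2 - F %/ k.*2.+1)%N)%:R : R).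
  by rewrite natr_sum hsum.
rewrite hs.
move: up lo n0 tl tb1 tb2 z0 z1 Fpos.
set S := \sum_(1 <= k < K.+1) ((((F - 1) %/ k.*2 - F %/ k.*2.+1)%N)%:R : R).
set t := ((\sum_(K.+1 <= k < F.+1) Nk F k)%N)%:R.
set a := (Nk F 0)%:R. set tt := T R K. set f := (F%:R : R). set l := ln 2. set kk := (K%:R:R).
set q := f / (K.+1.*2)%:R. set p := (K.+1%:R : R)^-1.
move=> *; split; lra.
Qed.

Lemma sqrt_K (F : nat) : exists K, (K * K <= F < K.+1 * K.+1)%N.
Proof.
elim: F => [|F [K /andP[h1 h2]]]; first by exists 0%N.
case: (ltnP F.+1 (K.+1 * K.+1)) => h.
  by exists K; rewrite h andbT; lia.
exists K.+1%N; apply/andP; split => //; lia.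
Qed.

Lemma point_bound F : (1 <= F)%N ->
  `|(nF F)%:R - (1 - ln 2) * F%:R| <= 4 * Num.sqrt (F%:R : R).
Proof.
move=> F1; have [K /andP[h1 h2]] := sqrt_K F.
have K0 : (0 < K)%N by case: K h1 h2 => //=; lia.
have KF : (K <= F)%N by apply: leq_trans h1; rewrite leq_pmulr.
have [lo up] := @main_bounds F K K0 KF.
set s := Num.sqrt (F%:R : R).
have hs : (K%:R : R) <= s.
  have -> : (K%:R : R) = Num.sqrt ((K%:R : R) ^+ 2) by rewrite sqrtr_sqr ger0_norm ?ler0n.
  by apply: ler_wsqrtr; rewrite expr2 -natrM ler_nat.
have hk1 : (1 : R) <= K%:R by rewrite ler1n.
have hF2 : (F%:R : R) < (K%:R + 1) * (K%:R + 1) by rewrite natr1 -natrM ltr_nat.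
have q1 : (F%:R : R) / (K.+1%:R) < K%:R + 1.
  by rewrite ltr_pdivrMr ?ltr0n // -natr1.
have q2 : (F%:R : R) / (K.+1.*2%:R) <= (K%:R + 1) / 2.
  rewrite ler_pdivrMr ?ltr0n //.
  have e : (K.+1.*2%:R : R) = (K%:R + 1) * 2 by rewrite -muln2 natrM natr1.
  rewrite e; move: hF2; set k := (K%:R : R); move=> hF2.
  have -> : (k + 1) / 2 * ((k + 1) * 2) = (k + 1) * (k + 1) by field.
  exact: ltW.
move: lo up q1 q2 hs hk1.
set n := (nF F)%:R; set f := (F%:R : R); set l := ln 2; set k := (K%:R : R).
set a := f / _; set b := f / _.
move=> *; rewrite ler_norml; apply/andP; split; lra.
Qed.
End Fin.
Local Open Scope ring_scope.
Local Open Scope classical_set_scope.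

Theorem mainTheorem20 (R : realType) :
  (exists C : R, exists N : nat, forall F : nat, (N <= F)%N ->
     `| (nF F)%:R - (1 - ln 2) * F%:R | <= C * Num.sqrt (F%:R : R))
  /\ ((fun F : nat => (nF F)%:R / (F%:R : R)) @ \oo --> (1 - ln (2 : R))).
Proof.
split; first by exists 4, 1%N => F; apply: point_bound.
apply/cvgrPdist_le => eps e0.
apply: filterS (nbhs_infty_ger ((4 / eps) ^+ 2 + 1)) => n /= hn.
have e4 : 0 < 4 / eps by rewrite divr_gt0.
have sq0 : 0 <= (4 / eps) ^+ 2 by rewrite sqr_ge0.
have npos : (0 : R) < n%:R by lra.
have n1 : (1 <= n)%N by rewrite -(ltr0n R).
have hb := @point_bound R n n1.
set s := Num.sqrt (n%:R : R) in hb *.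
have s0 : 0 < s by rewrite sqrtr_gt0.
have ss : s * s = n%:R by rewrite -expr2 sqr_sqrtr // ltW.
have hs : 4 / eps <= s.
  have -> : 4 / eps = Num.sqrt ((4 / eps) ^+ 2) by rewrite sqrtr_sqr gtr0_norm.
  by apply: ler_wsqrtr; lra.
have -> : 1 - ln (2:R) - (nF n)%:R / n%:R = - (((nF n)%:R - (1 - ln (2:R)) * n%:R) / n%:R).
  by field; apply: lt0r_neq0.
rewrite normrN normf_div (gtr0_norm npos) ler_pdivrMr //.
apply: (le_trans hb).
rewrite -ss.
have h4 : 4 <= eps * s.
  by rewrite -(@ler_pdivrMl _ eps) // ; lra.
have : 4 * s <= (eps * s) * s by apply: ler_wpM2r; [exact: ltW|].
by rewrite mulrA.
Qed.
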